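(* Let $f\in C_b(\Omega\times\mathcal{R})$ and $t\in(0,1)$. Let $(\hat\pi_1,\phi_1)$ and $(\hat\pi_2,\phi_2)$ be pairs where each $\hat\pi_i$ is an environment kernel and $\phi_i$ is a probability density with respect to $\mathbb{P}$ such that $\phi_i\,\mathrm{d}\mathbb{P}$ is $\hat\pi_i$-invariant. Define $\gamma:=\frac{t\phi_1}{t\phi_1+(1-t)\phi_2}$, $\phi_3:=t\phi_1+(1-t)\phi_2$ and $\hat\pi_3:=\gamma\hat\pi_1+(1-\gamma)\hat\pi_2$. Then $\phi_3\,\mathrm{d}\mathbb{P}$ is $\hat\pi_3$-invariant and $H_f(\hat\pi_3,\phi_3)\ge tH_f(\hat\pi_1,\phi_1)+(1-t)H_f(\hat\pi_2,\phi_2)$.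
   Context: Let $d,B\ge1$, $\mathcal{R}:=\{z\in\mathbb{Z}^d:0<|z_1|+\cdots+|z_d|\le B\}$. An environment is $\omega=(\omega_x)_{x\in\mathbb{Z}^d}$ with $\omega_x=(\pi(x,x+z))_{z\in\mathcal{R}}$ a probability vector; $\Omega$ is the environment space, $(T_z\omega)_x=\omega_{x+z}$, $\mathbb{P}$ a probability on $\Omega$ stationary and ergodic under shifts. An environment kernel is a measurable $\hat\pi:\Omega\times\mathcal{R}\to[0,\infty)$ with $\sum_z\hat\pi(\cdot,z)=1$ $\mathbb{P}$-a.s. For a probability density $\phi$ w.r.t. $\mathbb{P}$, $\phi\,\mathrm{d}\mathbb{P}$ is $\hat\pi$-invariant if $\phi(\omega)=\sum_{z\in\mathcal{R}}\phi(T_{-z}\omega)\hat\pi(T_{-z}\omega,z)$ for $\mathbb{P}$-a.e. $\omega$. For $f\in C_b(\Omega\times\mathcal{R})$, $H_f(\hat\pi,\phi):=\int\sum_{z\in\mathcal{R}}\hat\pi(\omega,z)\left(f(\omega,z)-\log\frac{\hat\pi(\omega,z)}{\pi(0,z)}\right)\phi(\omega)\,\mathrm{d}\mathbb{P}(\omega)$. *)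

(* Defs.v *)
From HB Require Import structures.
From mathcomp Require Import all_boot all_order all_algebra.
From mathcomp Require Import all_classical all_reals all_analysis.
Set Implicit Arguments. Unset Strict Implicit. Unset Printing Implicit Defensive.
Import Order.TTheory GRing.Theory Num.Theory.
Import numFieldNormedType.Exports.
Local Open Scope classical_set_scope.
Local Open Scope ring_scope.

(** Z^d is represented by row vectors ['rV[int]_d].
    The finite step set R = {z in Z^d : 0 < |z_1|+...+|z_d| <= B} is
    represented by the finite type [step d B]: functions
    f : 'I_d -> 'I_(2B+1) encoding the vector (f i - B)_i, restricted to
    those whose l^1 norm lies in (0, B]. *)

Definition stepcoord (d B : nat) (f : {ffun 'I_d -> 'I_(2 * B).+1}) : 'rV[int]_d :=
  \row_i ((f i : nat)%:Z - B%:Z).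

Definition norm1 (d : nat) (z : 'rV[int]_d) : nat := (\sum_(i < d) `|z ord0 i|)%N.

Definition in_steps (d B : nat) (f : {ffun 'I_d -> 'I_(2 * B).+1}) : bool :=
  (0 < norm1 (stepcoord f))%N && (norm1 (stepcoord f) <= B)%N.

Definition step (d B : nat) := {f : {ffun 'I_d -> 'I_(2 * B).+1} | in_steps f}.

Definition stepv (d B : nat) (z : step d B) : 'rV[int]_d := stepcoord (val z).

(** Ambient environment space: all w : Z^d -> R -> real, w x z = pi(x, x+z),
    with the product (pointwise) topology, and its Borel sigma-algebra
    (which coincides with the product sigma-algebra here). *)
Notation envT R d B := {ptws 'rV[int]_d -> {ptws step d B -> R}}.

Definition env (R : realType) (d B : nat) :=
  g_sigma_algebraType (@open (envT R d B)).

Definition OmegaSet (R : realType) (d B : nat) : set (env R d B) :=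
  [set w | forall x : 'rV[int]_d,
     (forall z : step d B, 0 <= w x z) /\ \sum_(z : step d B) w x z = 1].

Definition shift (R : realType) (d B : nat) (v : 'rV[int]_d) (w : env R d B)
  : env R d B := fun x => w (x + v).

Definition stationary (R : realType) (d B : nat) (P : probability (env R d B) R) :=
  forall (v : 'rV[int]_d) (A : set (env R d B)),
    measurable A -> P (shift v @^-1` A) = P A.

Definition ergodic (R : realType) (d B : nat) (P : probability (env R d B) R) :=
  forall A : set (env R d B), measurable A ->
    (forall v : 'rV[int]_d, shift v @^-1` A = A) -> P A = 0%E \/ P A = 1%E.

(** Bounded continuous functions on Omega x R (R finite and discrete). *)
Definition Cb (R : realType) (d B : nat) (f : env R d B -> step d B -> R) :=
  forall z : step d B,
    {within (@OmegaSet R d B : set (envT R d B)), continuous (fun w : envT R d B => f w z)} /\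
    exists M : R, forall w, @OmegaSet R d B w -> `|f w z| <= M.

Definition env_kernel (R : realType) (d B : nat) (P : probability (env R d B) R)
  (pih : env R d B -> step d B -> R) :=
  [/\ forall z : step d B, measurable_fun setT (fun w => pih w z),
      forall w z, 0 <= pih w z &
      {ae P, forall w, \sum_(z : step d B) pih w z = 1}].

Definition prob_density (R : realType) (d B : nat) (P : probability (env R d B) R)
  (phi : env R d B -> R) :=
  [/\ measurable_fun setT phi, forall w, 0 <= phi w &
      (\int[P]_w (phi w)%:E = 1)%E].

Definition pihat_invariant (R : realType) (d B : nat) (P : probability (env R d B) R)
  (pih : env R d B -> step d B -> R) (phi : env R d B -> R) :=
  {ae P, forall w, phi w =
     \sum_(z : step d B) phi (shift (- stepv z) w) * pih (shift (- stepv z) w) z}.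

Definition relent (R : realType) (a p : R) : \bar R :=
  if a == 0 then 0%E else if p == 0 then +oo%E else (a * ln (a / p))%:E.

(** H_f(pih, phi) = int sum_z pih(w,z) (f(w,z) - log (pih(w,z)/pi(0,z))) phi(w) dP,
    with pi(0,z) = w_0(z). *)
Definition Hf (R : realType) (d B : nat) (P : probability (env R d B) R)
  (f : env R d B -> step d B -> R)
  (pih : env R d B -> step d B -> R) (phi : env R d B -> R) : \bar R :=
  (\int[P]_w ((\sum_(z : step d B)
       ((pih w z * f w z)%:E - relent (pih w z) (w (0%R : 'rV[int]_d) z))) * (phi w)%:E))%E.

(* Main.v *)
Require Import Defs.
From HB Require Import structures.
From mathcomp Require Import all_boot all_order all_algebra.
From mathcomp Require Import all_classical all_reals all_analysis.
From mathcomp Require Import measurable_realfun.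
From mathcomp Require Import ring lra.
Set Implicit Arguments. Unset Strict Implicit. Unset Printing Implicit Defensive.
Import Order.TTheory GRing.Theory Num.Theory.
Import numFieldNormedType.Exports.
Local Open Scope classical_set_scope.
Local Open Scope ring_scope.
Section gen.
Local Open Scope ereal_scope.
Context d (T : measurableType d) (R : realType) (mu : {measure set T -> \bar R}).
Import HBNNSimple.

Lemma le_int_any (f1 f2 : T -> \bar R) : (forall x, 0 <= f1 x) ->
  (forall x, f1 x <= f2 x) -> \int[mu]_x f1 x <= \int[mu]_x f2 x.
Proof.
move=> f10 f12.
rewrite !ge0_integralTE //; last by move=> x; exact: le_trans (f12 x).
apply: ereal_sup_le => _ [h hf <-]; exists h => //= x; exact: le_trans (hf x) _.
Qed.

Lemma null_int_ge0 (D : set T) (h : T -> \bar R) : measurable D -> mu (~` D) = 0 ->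
  (forall x, 0 <= h x) -> \int[mu]_x h x = \int[mu]_(x in D) h x.
Proof.
move=> mD mDc h0; apply/eqP; rewrite eq_le; apply/andP; split; last first.
  rewrite integral_mkcond; apply: le_int_any => x; rewrite /patch; case: ifP => //.
rewrite [X in X <= _]ge0_integralTE //; apply: ge_ereal_sup => _ [s hs <-].
rewrite -integralT_nnsfun.
rewrite -(setUv D) ge0_integral_setU //; last 4 first.
- exact: measurableC.
- by apply/measurable_EFinP; exact: measurable_funP.
- by move=> x _; rewrite lee_fin.
- by rewrite /disj_set setICr.
rewrite [X in _ + X]null_set_integral //; cycle 1.
all: try exact: measurableC.
all: try by apply/measurable_EFinP; exact: measurable_funP.

rewrite adde0 !(integral_mkcond D); apply: le_int_any => x; rewrite /patch;
  case: ifP => // _; rewrite ?lee_fin //; try exact: fun_ge0; exact: hs.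
Qed.

Lemma null_int (D : set T) (h : T -> \bar R) : measurable D -> mu (~` D) = 0 ->
  \int[mu]_x h x = \int[mu]_(x in D) h x.
Proof.
move=> mD mDc; rewrite integralE [RHS]integralE.
by rewrite (@null_int_ge0 D (h^\+)) // (@null_int_ge0 D (h^\-)).
Qed.
End gen.
Section ereal_alg.
Local Open Scope ereal_scope.
Context (R : realType).

Lemma ereal_fin (t : R) (P1 P2 P3 N1 N2 N3 : \bar R) : (0 < t < 1)%R ->
  0 <= P1 -> 0 <= P2 -> 0 <= P3 -> 0 <= N1 -> 0 <= N2 -> 0 <= N3 ->
  N3 <= t%:E * N1 + (1 - t)%:E * N2 ->
  t%:E * P1 + (1 - t)%:E * P2 + N3 <= P3 + (t%:E * N1 + (1 - t)%:E * N2) ->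
  t%:E * (P1 - N1) + (1 - t)%:E * (P2 - N2) <= P3 - N3.
Proof.
move=> /andP[t0 t1] P1g P2g P3g N1g N2g N3g hN hB.
have t0' : 0 < t%:E by rewrite lte_fin.
have t1' : 0 < (1 - t)%:E by rewrite lte_fin subr_gt0.
case: N1 N1g hN hB => [n1| |] // N1g hN hB; last first.
  by rewrite addeNy gt0_muleNy // addNye leNye.
case: N2 N2g hN hB => [n2| |] // N2g hN hB; last first.
  by rewrite addeNy gt0_muleNy // addeNy leNye.
rewrite -!EFinM -EFinD in hN hB *.
case: N3 N3g hN hB => [n3| |] // N3g hN hB.
case: P1 P1g hB => [p1| |] // P1g hB; last first.
  rewrite gt0_muley // in hB.
  case: P3 P3g hB => [p3| |] // P3g hB; last by rewrite leey.
  case: P2 P2g hB => [p2| |] // P2g hB.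
  by rewrite gt0_muley // !addye // leye_eq in hB.
case: P2 P2g hB => [p2| |] // P2g hB; last first.
  rewrite gt0_muley // in hB.
  case: P3 P3g hB => [p3| |] // P3g hB; last by rewrite leey.
case: P3 P3g hB => [p3| |] // P3g hB.
rewrite -!EFinM -!EFinD in hB; rewrite -!EFinB -!EFinM -!EFinD.
rewrite !lee_fin in hN hB *.
lra.
by rewrite addye // leey.
Qed.
End ereal_alg.
Section pw.
Local Open Scope ereal_scope.
Context (R : realType).

Lemma pw_real (t a b c : R) : (0 < t < 1)%R -> (t * a + (1 - t) * b <= c)%R ->
  (Num.max (- c) 0 <= t * Num.max (- a) 0 + (1 - t) * Num.max (- b) 0)%R /\
  (t * Num.max a 0 + (1 - t) * Num.max b 0 + Num.max (- c) 0 <=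
    Num.max c 0 + (t * Num.max (- a) 0 + (1 - t) * Num.max (- b) 0))%R.
Proof.
move=> /andP[t0 t1] h.
have ma (x : R) : (Num.max x 0 = if 0 <= x then x else 0)%R.
  by case: (lerP 0 x).
have mna (x : R) : (Num.max (- x) 0 = if 0 <= x then 0 else - x)%R.
  by case: (lerP 0 x) => hx; case: (lerP (- x) 0); rewrite ?oppr_le0 ?oppr_lt0 // => hh; lra.
rewrite !mna !ma.
case: (lerP 0 a) => ha; case: (lerP 0 b) => hb; case: (lerP 0 c) => hc; split; nra.
Qed.

Lemma pw (t : R) (a b c : \bar R) : (0 < t < 1)%R -> a != +oo -> b != +oo -> c != +oo ->
  t%:E * a + (1-t)%:E * b <= c ->
  maxe (- c) 0 <= t%:E * maxe (- a) 0 + (1 - t)%:E * maxe (- b) 0 /\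
  t%:E * maxe a 0 + (1-t)%:E * maxe b 0 + maxe (- c) 0 <=
    maxe c 0 + (t%:E * maxe (- a) 0 + (1 - t)%:E * maxe (- b) 0).
Proof.
move=> ht; have /andP[t0 t1] := ht.
have t0' : 0 < t%:E by rewrite lte_fin.
have t1' : 0 < (1 - t)%:E by rewrite lte_fin subr_gt0.
have mx0 (x : \bar R) : 0 <= maxe x 0 by rewrite le_max lexx orbT.
have pos (k : R) x : (0 < k)%R -> 0 <= k%:E * maxe x 0.
  by move=> k0; rewrite mule_ge0 // lee_fin ltW.
have nNy (x : \bar R) : 0 <= x -> x != -oo by case: x.
case: a => [a| |] // _; last first.
  rewrite /= maxye gt0_muley // addye; last exact/nNy/pos.
  by rewrite addey ?leey //; apply: nNy; rewrite le_max lexx orbT.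
case: b => [b| |] // _; last first.
  rewrite /= maxye gt0_muley // addey; last exact/nNy/pos.
  by rewrite addey ?leey //; apply: nNy; rewrite le_max lexx orbT.
case: c => [c| |] // _ h.
  rewrite -!EFinN -!EFin_max -!EFinM -!EFinD !lee_fin.
  by apply: pw_real; rewrite // -lee_fin EFinD !EFinM.

Qed.
End pw.
Section main_gen.
Local Open Scope ereal_scope.
Context d (T : measurableType d) (R : realType) (mu : {measure set T -> \bar R}).

Lemma int_convex (D : set T) (g1 g2 g3 : T -> \bar R) (t : R) :
  measurable D -> mu (~` D) = 0 -> (0 < t < 1)%R ->
  measurable_fun D g1 -> measurable_fun D g2 -> measurable_fun D g3 ->
  (forall x, D x -> [/\ g1 x != +oo, g2 x != +oo, g3 x != +oo &
     t%:E * g1 x + (1 - t)%:E * g2 x <= g3 x]) ->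
  t%:E * \int[mu]_x g1 x + (1 - t)%:E * \int[mu]_x g2 x <= \int[mu]_x g3 x.
Proof.
move=> mD mDc ht m1 m2 m3 hp.
have /andP[t0 t1] := ht.
have t0' : (0 <= t)%R by exact: ltW.
have t1' : (0 <= 1 - t)%R by rewrite subr_ge0 ltW.
rewrite (@null_int _ _ _ mu D g1 mD mDc) (@null_int _ _ _ mu D g2 mD mDc) (@null_int _ _ _ mu D g3 mD mDc).
rewrite (integralE mu D g1) (integralE mu D g2) (integralE mu D g3).
have pos (g : T -> \bar R) : forall x, D x -> 0 <= g^\+ x by move=> x _; exact: funepos_ge0.
have neg (g : T -> \bar R) : forall x, D x -> 0 <= g^\- x by move=> x _; exact: funeneg_ge0.
have sc (k : R) (g : T -> \bar R) : (0 <= k)%R -> forall x, D x -> 0 <= k%:E * g^\- x.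
  by move=> k0 x Dx; rewrite mule_ge0 // lee_fin.
have msc (k : R) (g : T -> \bar R) : measurable_fun D g -> measurable_fun D (fun x => k%:E * g^\- x).
  by move=> mg; apply: emeasurable_funM; [exact: measurable_cst | exact: measurable_funeneg].
have scp (k : R) (g : T -> \bar R) : (0 <= k)%R -> forall x, D x -> 0 <= k%:E * g^\+ x.
  by move=> k0 x Dx; rewrite mule_ge0 // lee_fin.
have mscp (k : R) (g : T -> \bar R) : measurable_fun D g -> measurable_fun D (fun x => k%:E * g^\+ x).
  by move=> mg; apply: emeasurable_funM; [exact: measurable_cst | exact: measurable_funepos].
apply: ereal_fin; first exact: ht.
1-6: by apply: integral_ge0 => x _; first [exact: funepos_ge0 | exact: funeneg_ge0].
- rewrite -(ge0_integralZl_EFin _ mD) //; last exact: measurable_funeneg.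
  rewrite -(ge0_integralZl_EFin _ mD) //; last exact: measurable_funeneg.
  rewrite -ge0_integralD //; try exact: msc; try exact: sc.
  apply: ge0_le_integral => //.
  - exact: measurable_funeneg.
  - by apply: emeasurable_funD; exact: msc.
  move=> x Dx; have [h1 h2 h3 h] := hp x Dx.
  by rewrite !funenegE; have [] := pw ht h1 h2 h3 h.
- do 4 (rewrite -(ge0_integralZl_EFin _ mD) //;
    last by first [exact: measurable_funeneg | exact: measurable_funepos]).
  rewrite -[X in _ <= _ + X]ge0_integralD //; try exact: msc; try exact: sc.
  rewrite -ge0_integralD //; try exact: mscp; try exact: scp.
  rewrite -ge0_integralD //; first last.
  - exact: measurable_funeneg.
  - by apply: emeasurable_funD; exact: mscp.
  - by move=> x Dx; rewrite adde_ge0 // ?scp.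
  rewrite -ge0_integralD //; first last.
  - by apply: emeasurable_funD; exact: msc.
  - by move=> x Dx; rewrite adde_ge0 // ?sc.
  - exact: measurable_funepos.
  apply: ge0_le_integral => //.
  - by move=> x Dx; rewrite !adde_ge0 // ?scp.
  - apply: emeasurable_funD; last exact: measurable_funeneg.
    by apply: emeasurable_funD; exact: mscp.
  - apply: emeasurable_funD; first exact: measurable_funepos.
    by apply: emeasurable_funD; exact: msc.
  move=> x Dx; have [h1 h2 h3 h] := hp x Dx.
  by rewrite !funenegE !funeposE; have [] := pw ht h1 h2 h3 h.
Qed.
End main_gen.
Section topo.
Context (R : realType) (d B : nat).
Local Notation E := (envT R d B).
Local Notation Env := (env R d B).

Lemma ev_cont (x : 'rV[int]_d) (z : step d B) : continuous (fun w : E => w x z).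
Proof.
move=> w.
exact: (continuous_comp (@proj_continuous _ _ x w) (@proj_continuous _ _ z _)).
Qed.

Lemma sum_cont (x : 'rV[int]_d) : continuous (fun w : E => \sum_(z : step d B) w x z).
Proof.
have : forall s : seq (step d B), continuous (fun w : E => \sum_(z <- s) w x z).
  elim => [|a s IH].
    rewrite (_ : (fun w : E => _) = cst 0); last by apply/funext => w; rewrite big_nil.
    exact: cst_continuous.
  rewrite (_ : (fun w : E => _) = (fun w : E => w x a) + (fun w : E => \sum_(z <- s) w x z)).
    by move=> w; apply: continuousD; [exact: ev_cont | exact: IH].
  by apply/funext => w; rewrite big_cons.
by move=> /(_ (index_enum _)).
Qed.

Lemma Omega_closed : closed (@OmegaSet R d B : set E).
Proof.
rewrite (_ : @OmegaSet R d B = \bigcap_(x in setT)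
   ((\bigcap_(z in setT) (fun w : E => w x z) @^-1` [set r : R | 0 <= r]) `&`
    ((fun w : E => \sum_(z : step d B) w x z) @^-1` [set r : R | r = 1]))).
  apply: closed_bigI => x _; apply: closedI.
    apply: closed_bigI => z _; apply: preimage_closed; last exact: closed_ge.
    by move=> w _; exact: ev_cont.
  apply: preimage_closed; last exact: closed_eq.
  by move=> w _; exact: sum_cont.
apply/seteqP; split => w /=.
  by move=> h x _; have [h1 h2] := h x; split => // z _; exact: h1.
by move=> h x; have [h1 h2] := h x I; split => // z; exact: h1.
Qed.

Lemma open_meas (U : set E) : open U -> measurable (U : set Env).
Proof. by move=> oU; exact: sub_sigma_algebra. Qed.

Lemma closed_meas (U : set E) : closed U -> measurable (U : set Env).
Proof.
move=> cU; rewrite -(setCK U); apply: measurableC; apply: open_meas.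
exact: closed_openC.
Qed.

Lemma Omega_meas : measurable (@OmegaSet R d B : set Env).
Proof. apply: closed_meas; exact: Omega_closed. Qed.

Lemma cont_meas (D : set Env) (g : E -> R) : measurable D ->
  {within (D : set E), continuous g} -> measurable_fun D (g : Env -> R).
Proof.
move=> mD /continuousP cg.
apply: (measurability _ (RGenOpens.measurableE R)).
move=> _ [_ [a [b ->] <-]].
have /open_subspaceP [V oV VD] : open ((g @^-1` `]a, b[%classic) : set (subspace (D : set E))).
  by apply: cg; exact: interval_open.
by rewrite setIC -VD; apply: measurableI => //; exact: open_meas.
Qed.

Lemma ev_meas (x : 'rV[int]_d) (z : step d B) :
  measurable_fun [set: Env] (fun w : Env => w x z).
Proof.
apply: cont_meas => //; apply: continuous_subspaceT => w; exact: ev_cont.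
Qed.
End topo.
Section real_core.
Context (R : realType).

Definition rel_r (a p : R) : R := if a == 0 then 0 else a * ln (a / p).

Lemma rel_r0 p : rel_r 0 p = 0.
Proof. by rewrite /rel_r eqxx. Qed.

Lemma tangent (p m x : R) : 0 < p -> 0 < m -> 0 <= x ->
  rel_r m p + (ln (m / p) + 1) * (x - m) <= rel_r x p.
Proof.
move=> p0 m0 x0.
rewrite /rel_r (negbTE (lt0r_neq0 m0)).
have [->|xn0] := eqVneq x 0.

  have -> : m * ln (m / p) + (ln (m / p) + 1) * (0 - m) = - m by ring.
  by rewrite oppr_le0 ltW.
have xp : 0 < x by rewrite lt0r xn0.

have hM : ln (m / x) <= m / x - 1.
  have := @le_ln1Dx R (m / x - 1).
  rewrite (_ : 1 + (m / x - 1) = m / x); last by ring.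
  apply.
  have : 0 < m / x by exact: divr_gt0.
  lra.
have hM' : x * ln (m / x) <= m - x.
  have -> : m - x = x * (m / x - 1) by field; rewrite lt0r_neq0.
  by rewrite ler_wpM2l // ltW.
have eL : ln (x / p) = ln (m / p) - ln (m / x).
  rewrite !ln_div ?posrE //; ring.
rewrite eL.
set L := ln (m / p); set M := ln (m / x) in hM' *.
have -> : m * L + (L + 1) * (x - m) = x * L + x - m by ring.
have -> : x * (L - M) = x * L - x * M by ring.

lra.
Qed.

Lemma rel_convex (p a b g : R) : 0 < p -> 0 <= a -> 0 <= b -> 0 <= g <= 1 ->
  rel_r (g * a + (1 - g) * b) p <= g * rel_r a p + (1 - g) * rel_r b p.
Proof.
move=> p0 a0 b0 /andP[g0 g1].
have g1' : 0 <= 1 - g by rewrite subr_ge0.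
set m := g * a + (1 - g) * b.
have m0 : 0 <= m by rewrite addr_ge0 // mulr_ge0.
have [m00|mp] := eqVneq m 0.
  have ga : g * a = 0.
    apply/eqP; rewrite eq_le mulr_ge0 // andbT.
    by rewrite -m00 /m lerDl mulr_ge0.
  have gb : (1 - g) * b = 0.
    apply/eqP; rewrite eq_le mulr_ge0 // andbT.
    by rewrite -m00 /m lerDr mulr_ge0.
  rewrite m00 rel_r0.
  have -> : g * rel_r a p = 0.
    by move/eqP: ga; rewrite mulf_eq0 => /orP[/eqP->|/eqP->]; rewrite ?mul0r ?rel_r0 ?mulr0.
  have -> : (1 - g) * rel_r b p = 0.
    by move/eqP: gb; rewrite mulf_eq0 => /orP[/eqP->|/eqP->]; rewrite ?mul0r ?rel_r0 ?mulr0.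
  by rewrite addr0.
have mpos : 0 < m by rewrite lt0r mp.
have ha := tangent p0 mpos a0.
have hb := tangent p0 mpos b0.
set c := ln (m / p) + 1 in ha hb.
have h1 := ler_wpM2l g0 ha.
have h2 := ler_wpM2l g1' hb.
have -> : rel_r m p = g * (rel_r m p + c * (a - m)) + (1 - g) * (rel_r m p + c * (b - m)).
  rewrite /m; ring.
exact: lerD.
Qed.
End real_core.
Section real_core2.
Context (R : realType).

Lemma per_z (t phi1 phi2 a1 a2 p fz phi3 g a3 : R) : 0 < t < 1 -> 0 < phi1 -> 0 < phi2 ->
  0 <= a1 -> 0 <= a2 -> 0 <= p -> (a1 != 0 -> p != 0) -> (a2 != 0 -> p != 0) ->
  phi3 = t * phi1 + (1 - t) * phi2 -> g = t * phi1 / phi3 ->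
  a3 = g * a1 + (1 - g) * a2 ->
  t * ((a1 * fz - rel_r a1 p) * phi1) + (1 - t) * ((a2 * fz - rel_r a2 p) * phi2)
    <= (a3 * fz - rel_r a3 p) * phi3.
Proof.
move=> /andP[t0 t1] ph1 ph2 a10 a20 p0 h1 h2 e3 eg ea.
have phi3p : 0 < phi3 by rewrite e3; apply: addr_gt0; apply: mulr_gt0 => //; rewrite subr_gt0.
have phi3n : phi3 != 0 by exact: lt0r_neq0.
have e : t * ((a1 * fz - rel_r a1 p) * phi1) + (1 - t) * ((a2 * fz - rel_r a2 p) * phi2)
    = (a3 * fz) * phi3 - (g * rel_r a1 p + (1 - g) * rel_r a2 p) * phi3.
  rewrite ea eg e3; field.
  by rewrite -e3.
have hc : rel_r a3 p <= g * rel_r a1 p + (1 - g) * rel_r a2 p.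
  have [p00|pn0] := eqVneq p 0.
    have a1z : a1 = 0 by apply/eqP; apply: contraTT isT => /h1; rewrite p00 eqxx.
    have a2z : a2 = 0 by apply/eqP; apply: contraTT isT => /h2; rewrite p00 eqxx.
    by rewrite ea a1z a2z !mulr0 addr0 !rel_r0 !mulr0 addr0.
  rewrite ea; apply: rel_convex => //; first by rewrite lt0r pn0.
  apply/andP; split; first by rewrite eg divr_ge0 // ?mulr_ge0 // ltW.
  rewrite eg ler_pdivrMr // mul1r e3 lerDl mulr_ge0 // ?ltW // subr_gt0.
  by [].

have := ler_wpM2r (ltW phi3p) hc.
rewrite e; lra.
Qed.
End real_core2.
Section ereal_core.
Context (R : realType).
Local Open Scope ereal_scope.

Lemma relent_eq (a p : R) :
  relent a p = if (a != 0%R) && (p == 0%R) then +oo else (rel_r a p)%:E.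
Proof. by rewrite /relent /rel_r; case: (a == 0%R); case: (p == 0%R). Qed.

Lemma sum_term (I : finType) (c a p : I -> R) :
  \sum_(z : I) ((c z)%:E - relent (a z) (p z)) =
  if [exists z, (a z != 0%R) && (p z == 0%R)] then -oo
  else (\sum_(z : I) (c z - rel_r (a z) (p z)))%:E.
Proof.
case: existsP => [[z0 hz]|hn].
  by rewrite (bigD1 z0) //= relent_eq hz /= addeNy addNye.
rewrite -sumEFin; apply: eq_bigr => z _.
rewrite relent_eq; case: ifP => [h|_]; first by exfalso; apply: hn; exists z.
by rewrite EFinB.
Qed.

Definition Gint (I : finType) (a p c : I -> R) (phi : R) : \bar R :=
  (\sum_(z : I) ((a z * c z)%:E - relent (a z) (p z))) * phi%:E.

Lemma Gint_noy (I : finType) (a p c : I -> R) (phi : R) : (0 <= phi)%R ->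
  Gint a p c phi != +oo.
Proof.
move=> ph; rewrite /Gint sum_term; case: ifP => _.
  have [->|phn] := eqVneq phi 0%R; first by rewrite mule0.
  by rewrite gt0_mulNye // lte_fin lt0r phn.
by rewrite -EFinM.
Qed.

Lemma Gint_eq (I : finType) (a a' p c : I -> R) (phi : R) : a =1 a' ->
  Gint a p c phi = Gint a' p c phi.
Proof. by move=> e; rewrite /Gint; congr (_ * _); apply: eq_bigr => z _; rewrite e. Qed.

Lemma pw_G (I : finType) (t phi1 phi2 phi3 g : R) (a1 a2 a3 p c : I -> R) :
  (0 < t < 1)%R -> (0 <= phi1)%R -> (0 <= phi2)%R ->
  (forall z, 0 <= a1 z)%R -> (forall z, 0 <= a2 z)%R -> (forall z, 0 <= p z)%R ->
  phi3 = (t * phi1 + (1 - t) * phi2)%R -> g = (t * phi1 / phi3)%R ->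
  (forall z, a3 z = g * a1 z + (1 - g) * a2 z)%R ->
  t%:E * Gint a1 p c phi1 + (1 - t)%:E * Gint a2 p c phi2 <= Gint a3 p c phi3.
Proof.
move=> ht ph1 ph2 a10 a20 p0 e3 eg ea.
have /andP[t0 t1] := ht.
have t1' : (0 < 1 - t)%R by rewrite subr_gt0.
have [ph1z|ph1n] := eqVneq phi1 0%R.
  have gz : g = 0%R by rewrite eg ph1z mulr0 mul0r.
  have ea2 : a3 =1 a2 by move=> z; rewrite ea gz mul0r add0r subr0 mul1r.
  rewrite (Gint_eq _ _ _ ea2) /Gint ph1z mule0 mule0 add0e.
  have [ph2z|ph2n] := eqVneq phi2 0%R.
    by rewrite ph2z mule0 mule0 e3 ph1z ph2z !mulr0 addr0 mule0.
  rewrite e3 ph1z mulr0 add0r EFinM muleCA.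
  by rewrite lexx.
have ph1p : (0 < phi1)%R by rewrite lt0r ph1n.
have [ph2z|ph2n] := eqVneq phi2 0%R.
  have e3' : phi3 = (t * phi1)%R by rewrite e3 ph2z mulr0 addr0.
  have g1 : g = 1%R by rewrite eg e3' divff // mulf_neq0 // lt0r_neq0.
  have ea1 : a3 =1 a1 by move=> z; rewrite ea g1 mul1r subrr mul0r addr0.
  rewrite (Gint_eq _ _ _ ea1) /Gint ph2z !mule0 adde0 e3' EFinM muleCA.
  by rewrite lexx.
have ph2p : (0 < phi2)%R by rewrite lt0r ph2n.
have phi3p : (0 < phi3)%R by rewrite e3 addr_gt0 // mulr_gt0.
have g0 : (0 < g)%R by rewrite eg divr_gt0 // mulr_gt0.
have g1 : (0 < 1 - g)%R.
  rewrite eg subr_gt0 ltr_pdivrMr // mul1r e3 ltrDl mulr_gt0 //.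
have ha3 z : (a3 z == 0%R) = (a1 z == 0%R) && (a2 z == 0%R).
  rewrite ea paddr_eq0 ?mulr_ge0 // ?ltW //.
  by rewrite !mulf_eq0 (negbTE (lt0r_neq0 g0)) (negbTE (lt0r_neq0 g1)).
rewrite /Gint !sum_term.
case: ifP => b1.
  by rewrite gt0_mulNye ?lte_fin // gt0_muleNy ?lte_fin // addNye leNye.
case: ifP => b2.
  by rewrite gt0_mulNye ?lte_fin // gt0_muleNy ?lte_fin // addeNy leNye.
case: ifP => b3.
  exfalso; move/existsP: b3 => [z /andP[]].
  rewrite ha3 negb_and => /orP[h|h] hp.
    by move/negbT/negP: b1; apply; apply/existsP; exists z; rewrite h hp.
  by move/negbT/negP: b2; apply; apply/existsP; exists z; rewrite h hp.
rewrite -!EFinM -EFinD lee_fin.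
rewrite !mulr_suml !mulr_sumr -big_split /=.
apply: ler_sum => z _.
have nb1 : a1 z != 0%R -> p z != 0%R.
  by move=> h; apply/negP => hp; move/negbT/negP: b1; apply; apply/existsP; exists z; rewrite h hp.
have nb2 : a2 z != 0%R -> p z != 0%R.
  by move=> h; apply/negP => hp; move/negbT/negP: b2; apply; apply/existsP; exists z; rewrite h hp.
exact: (@per_z R t phi1 phi2 (a1 z) (a2 z) (p z) (c z) phi3 g (a3 z) ht ph1p ph2p (a10 z) (a20 z) (p0 z) nb1 nb2 e3 eg (ea z)).
Qed.
End ereal_core.
Section meas.
Context (R : realType).

Lemma measurable_inv' : measurable_fun [set: R] (fun x : R => x^-1).
Proof.
rewrite (_ : (fun x : R => x^-1) = (fun x => if x == 0 then 0 else x^-1)); last first.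
  by apply/funext => x; case: eqP => // ->; rewrite invr0.
apply: measurable_fun_if => //.
  by apply: (@measurable_fun_eqr _ _ _ _ id (cst 0)) => //; exact: measurable_cst.
rewrite (_ : _ `&` _ = [set x : R | x != 0]); last first.
  by apply/seteqP; split => x /=; [case => _ /negbT | move=> h; split => //; apply/negbTE].
apply: open_continuous_measurable_fun; first exact: open_neq.
move=> x; rewrite inE /= => hx; exact: inv_continuous.
Qed.

Context d (T : measurableType d).

Lemma meas_relent (D : set T) (a p : T -> R) : measurable D ->
  measurable_fun D a -> measurable_fun D p ->
  measurable_fun D (fun w => relent (a w) (p w)).
Proof.
move=> mD ma mp; rewrite /relent.
have ea : measurable_fun D (fun w => a w == 0).
  by apply: measurable_fun_eqr => //; exact: measurable_cst.
apply: measurable_fun_if => //; try exact: ea; try exact: measurable_cst.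
have mD' : measurable (D `&` (fun w => a w == 0) @^-1` [set false]) by exact: ea.
have sD' : D `&` (fun w => a w == 0) @^-1` [set false] `<=` D by move=> x [].
have mp' := measurable_funS mD sD' mp.
have ma' := measurable_funS mD sD' ma.
have ep : measurable_fun (D `&` (fun w => a w == 0) @^-1` [set false]) (fun w => p w == 0).
  by apply: measurable_fun_eqr => //; exact: measurable_cst.
apply: measurable_fun_if => //; try exact: ea; try exact: measurable_cst.
have mD'' : measurable ((D `&` (fun w => a w == 0) @^-1` [set false]) `&`
   (fun w => p w == 0) @^-1` [set false]) by exact: ep.
have sD'' : (D `&` (fun w => a w == 0) @^-1` [set false]) `&`
   (fun w => p w == 0) @^-1` [set false] `<=` D by move=> x [[]].
apply/measurable_EFinP.
apply: measurable_funM; first exact: measurable_funS mD sD'' ma.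
apply: measurableT_comp; first exact: measurable_ln.
apply: measurable_funM; first exact: measurable_funS mD sD'' ma.
apply: measurableT_comp; first exact: measurable_inv'.
exact: measurable_funS mD sD'' mp.
Qed.

Lemma meas_G (I : finType) (D : set T) (a p c : T -> I -> R) (phi : T -> R) :
  measurable D ->
  (forall z, measurable_fun D (fun w => a w z)) ->
  (forall z, measurable_fun D (fun w => p w z)) ->
  (forall z, measurable_fun D (fun w => c w z)) ->
  measurable_fun D phi ->
  measurable_fun D (fun w => Gint (a w) (p w) (c w) (phi w)).
Proof.
move=> mD ma mp mc mphi; rewrite /Gint.
apply: emeasurable_funM; last exact/measurable_EFinP.
apply: emeasurable_sum => z; apply: emeasurable_funB.
  by apply/measurable_EFinP; exact: measurable_funM.
exact: meas_relent.
Qed.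
End meas.
Unset Implicit Arguments.
Theorem lemma2p2 (R : realType) (d B : nat) (hd : (1 <= d)%N) (hB : (1 <= B)%N)
  (P : probability (env R d B) R)
  (hOmega : P (@OmegaSet R d B) = 1%E)
  (hstat : stationary P) (herg : ergodic P)
  (f : env R d B -> step d B -> R) (hf : Cb f)
  (t : R) (ht : 0 < t < 1)
  (pih1 pih2 : env R d B -> step d B -> R) (phi1 phi2 : env R d B -> R)
  (hk1 : env_kernel P pih1) (hp1 : prob_density P phi1) (hi1 : pihat_invariant P pih1 phi1)
  (hk2 : env_kernel P pih2) (hp2 : prob_density P phi2) (hi2 : pihat_invariant P pih2 phi2) :
  let phi3 := fun w => t * phi1 w + (1 - t) * phi2 w in
  let gamma := fun w => t * phi1 w / phi3 w in
  let pih3 := fun w z => gamma w * pih1 w z + (1 - gamma w) * pih2 w z in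
  [/\ env_kernel P pih3, prob_density P phi3, pihat_invariant P pih3 phi3 &
      (t%:E * Hf P f pih1 phi1 + (1 - t)%:E * Hf P f pih2 phi2
         <= Hf P f pih3 phi3)%E].
Proof.
move=> phi3 gamma pih3.
case: hk1 => mk1 k1ge0 ae1; case: hk2 => mk2 k2ge0 ae2.
case: hp1 => mphi1 phi1ge0 int1; case: hp2 => mphi2 phi2ge0 int2.
have /andP[t0 t1] := ht.
have t1' : 0 < 1 - t by rewrite subr_gt0.
have phi3ge0 w : 0 <= phi3 w by rewrite /phi3 addr_ge0 // mulr_ge0 // ltW.
have gam01 w : 0 <= gamma w <= 1.
  rewrite /gamma; have [e|ne] := eqVneq (phi3 w) 0.
    by rewrite e invr0 mulr0 lexx ler01.
  have p3 : 0 < phi3 w by rewrite lt0r ne phi3ge0.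
  apply/andP; split; first by rewrite divr_ge0 // mulr_ge0 // ltW.
  by rewrite ler_pdivrMr // mul1r /phi3 lerDl mulr_ge0 // ltW.
have mphi3 : measurable_fun setT phi3.
  apply: measurable_funD; apply: measurable_funM => //; exact: measurable_cst.
have mgam : measurable_fun setT gamma.
  apply: measurable_funM; first by apply: measurable_funM => //; exact: measurable_cst.
  exact: (measurableT_comp (@measurable_inv' R) mphi3).
have mk3 z : measurable_fun setT (fun w => pih3 w z).
  apply: measurable_funD; apply: measurable_funM => //.
  apply: measurable_funB => //; exact: measurable_cst.
have key w z : phi3 w * pih3 w z = t * (phi1 w * pih1 w z) + (1 - t) * (phi2 w * pih2 w z).
  rewrite /pih3 /gamma; have [e|ne] := eqVneq (phi3 w) 0.
    have [h1 h2] : phi1 w = 0 /\ phi2 w = 0.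
      move/eqP: (e); rewrite /phi3 paddr_eq0; last 2 first.
      + by rewrite mulr_ge0 // ltW.
      + by rewrite mulr_ge0 // ltW.
      rewrite !mulf_eq0 (negbTE (lt0r_neq0 t0)) (negbTE (lt0r_neq0 t1')) /=.
      by move=> /andP[/eqP-> /eqP->].
    by rewrite e h1 h2 !mul0r !mulr0 addr0.
  move: ne; rewrite /phi3 => ne; by field.
split.
- split => //.
  + by move=> w z; rewrite /pih3 addr_ge0 // mulr_ge0 //; have /andP[] := gam01 w; rewrite // subr_ge0.
  + apply: filterS2 ae1 ae2 => w s1 s2.
    rewrite /pih3 big_split /= -!mulr_sumr s1 s2; ring.
- split => //.
  + under eq_integral => w _ do rewrite /phi3 EFinD !EFinM.
    rewrite ge0_integralD //; last 4 first.
    1,3: by move=> w _; apply: mule_ge0; rewrite lee_fin // ltW.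
    1,2: by apply: emeasurable_funM; [exact: measurable_cst | exact/measurable_EFinP].
    do 2 (rewrite ge0_integralZl_EFin //; last 3 first;
      [by move=> w _; rewrite lee_fin | exact/measurable_EFinP | exact: ltW | ]).
    by rewrite int1 int2 !mule1 -EFinD subrKC.
- apply: filterS2 hi1 hi2 => w e1 e2.
  under eq_bigr => z _ do rewrite key.
  by rewrite big_split /= -!mulr_sumr -e1 -e2.
have mOm := @Omega_meas R d B.
have nOm : P (~` @OmegaSet R d B) = 0%E by rewrite probability_setC // hOmega subee.
have sOm : @OmegaSet R d B `<=` setT by [].
have mf z : measurable_fun (@OmegaSet R d B) (fun w => f w z).
  exact: (cont_meas mOm (hf z).1).
have mev z : measurable_fun (@OmegaSet R d B) (fun w : env R d B => w (0%R : 'rV[int]_d) z).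
  exact: measurable_funS measurableT sOm (ev_meas _ _).
have m1 := meas_G mOm (fun z => measurable_funS measurableT sOm (mk1 z)) mev mf (measurable_funS measurableT sOm mphi1).
have m2 := meas_G mOm (fun z => measurable_funS measurableT sOm (mk2 z)) mev mf (measurable_funS measurableT sOm mphi2).
have m3 := meas_G mOm (fun z => measurable_funS measurableT sOm (mk3 z)) mev mf (measurable_funS measurableT sOm mphi3).
apply: (@int_convex _ _ R P (@OmegaSet R d B)
  (fun w => Gint (pih1 w) (fun z => w (0%R : 'rV[int]_d) z) (f w) (phi1 w))
  (fun w => Gint (pih2 w) (fun z => w (0%R : 'rV[int]_d) z) (f w) (phi2 w))
  (fun w => Gint (pih3 w) (fun z => w (0%R : 'rV[int]_d) z) (f w) (phi3 w))
  t mOm nOm ht m1 m2 m3).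
move=> w Ow; split.
- exact: Gint_noy.
- exact: Gint_noy.
- exact: Gint_noy.
apply: pw_G => //.
move=> z; exact: ((Ow 0%R).1 z).
Qed.
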